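(* In the cone setting of the context, for each $h,g\in\mathcal C_{\mathbb C}$, \[E(h,g)=\Big\{\frac{\ell(h)}{\ell(g)}:\ell\in\hat{\mathcal C}'_{\mathbb C}\Big\}.\]
   Context: Cone setting. $V$ is a real topological vector space, $\mathcal S\subset V'$ a set of linear functionals such that $\ell(x)=0$ for all $\ell\in\mathcal S$ implies $x=0$, $C_{\mathbb R}=\{h\in V\setminus\{0\}:\ell(h)\ge0\ \forall\ell\in\mathcal S\}$, and $e\in C_{\mathbb R}$ is such that for every $h\in V$ some $\lambda\ge0$ has $\lambda e-h\in C_{\mathbb R}$. Norm $\|h\|=\inf\{\lambda\ge0:\ell(\lambda e\pm h)\ge0\ \forall\ell\in\mathcal S\}$; $\mathcal B_{\mathbb R}$ the completion of $V$; $\mathcal C_{\mathbb R}=\{h\in\mathcal B_{\mathbb R}\setminus\{0\}:\ell(h)\ge0\ \forall\ell\in\mathcal S\}$; $\mathcal C'_{\mathbb R}=\{\ell\in\mathcal B'_{\mathbb R}:\ell(h)\ge0\ \forall h\in\mathcal C_{\mathbb R}\}$; $\mathring{\mathcal C}'_{\mathbb R}=\{\ell\in\mathcal C'_{\mathbb R}:\ell(x)>0\ \forall x\in\mathcal C_{\mathbb R}\}$. $\mathcal S_*$ is the weak-$*$ closure of the convex hull of $\{\lambda\ell:\lambda>0,\ell\in\mathcal S\}$; there exist $m\in\mathcal S_*$, $\kappa\in(0,1)$ with $m(e)=1$ and $m(h)\ge\kappa\|h\|$ on $\mathcal C_{\mathbb R}$. $\mathcal B_{\mathbb C}$ is the complexification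 of $\mathcal B_{\mathbb R}$, real functionals extended complex-linearly. $\mathcal C_{\mathbb C}=\{z(x+iy):z\in\mathbb C\setminus\{0\},x,y\in\mathcal C_{\mathbb R}\}$, $\mathcal C'_{\mathbb C}=\{\ell\in\mathcal B'_{\mathbb C}:\ell(h)\ne0\ \forall h\in\mathcal C_{\mathbb C}\}$, $\hat{\mathcal C}'_{\mathbb C}=\{\pm\ell\pm ip:\ell,p\in\mathring{\mathcal C}'_{\mathbb R}\}$. For $h,g\in\mathcal C_{\mathbb C}$, $E(h,g)=\{\ell(h)/\ell(g):\ell\in\mathcal C'_{\mathbb C}\}$. *)

(* Defs.v *)
From HB Require Import structures.
From mathcomp Require Import all_boot all_order all_algebra.
From mathcomp Require Import all_classical all_reals all_analysis.
From mathcomp Require Import complex.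
Set Implicit Arguments. Unset Strict Implicit. Unset Printing Implicit Defensive.
Import Order.TTheory GRing.Theory Num.Theory.
Import numFieldNormedType.Exports.
Local Open Scope ring_scope.
Local Open Scope classical_set_scope.

Section ConeDefs.
Context {R : realType} {B : normedModType R}.

Definition is_rlin (f : B -> R) : Prop :=
  forall (a : R) (x y : B), f (a *: x + y) = a * f x + f y.
Definition dualR : set (B -> R) := [set f | is_rlin f /\ continuous f].

Definition coneB (S : set (B -> R)) : set B :=
  [set h | h != 0 /\ forall l, S l -> 0 <= l h].
Definition dualcone (S : set (B -> R)) : set (B -> R) :=
  [set f | dualR f /\ forall h, coneB S h -> 0 <= f h].
Definition idualcone (S : set (B -> R)) : set (B -> R) :=
  [set f | dualcone S f /\ forall x, coneB S x -> 0 < f x].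

(** membership in S_* : weak-* closure (in B_R') of the convex hull of
    {lambda l : lambda > 0, l in S}, i.e. of all finite positive combinations
    of elements of S; written out via the basic weak-* neighbourhoods. *)
Definition in_Sstar (S : set (B -> R)) (m : B -> R) : Prop :=
  dualR m /\
  forall (xs : seq B) (eps : R), 0 < eps ->
    exists (n : nat) (c : nat -> R) (ls : nat -> (B -> R)),
      (0 < n)%N /\ (forall i, (i < n)%N -> 0 < c i /\ S (ls i)) /\
      forall x, x \in xs -> `| \sum_(i < n) c i * ls i x - m x | < eps.

(** Complexification B_C = B_R + i B_R : the pair (x, y) stands for x + i y.
    A C-linear functional on B_C is determined by its restriction to B_R,
    an R-linear map B_R -> C, i.e. a pair (a, b) of real functionals
    (l(x) = a(x) + i b(x) for real x); it acts by
    l(x + i y) = l(x) + i l(y). *)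
Definition BC := (B * B)%type.
Definition capp (l : (B -> R) * (B -> R)) (w : BC) : R[i] :=
  ((l.1 w.1 +i* l.2 w.1) + 'i * (l.1 w.2 +i* l.2 w.2))%C.

Definition dualC : set ((B -> R) * (B -> R)) :=
  [set l | dualR l.1 /\ dualR l.2].

(** C_C = { z (x + i y) : z in C \ {0}, x, y in C_R } *)
Definition coneC (S : set (B -> R)) : set BC :=
  [set w | exists (z : R[i]) (x y : B),
      z != 0 /\ coneB S x /\ coneB S y /\
      w = (complex.Re z *: x - complex.Im z *: y,
           complex.Im z *: x + complex.Re z *: y)].

Definition dualconeC (S : set (B -> R)) : set ((B -> R) * (B -> R)) :=
  [set l | dualC l /\ forall h, coneC S h -> capp l h != 0].

Definition hatdualconeC (S : set (B -> R)) : set ((B -> R) * (B -> R)) :=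
  [set lp | exists (l p : B -> R) (s1 s2 : R),
      idualcone S l /\ idualcone S p /\
      (s1 = 1 \/ s1 = -1) /\ (s2 = 1 \/ s2 = -1) /\
      lp = ((fun x => s1 * l x), (fun x => s2 * p x))].

Definition Eset (S : set (B -> R)) (h g : BC) : set R[i] :=
  [set (capp l h / capp l g)%R | l in dualconeC S].

End ConeDefs.

(** V is a real topological vector space,
    B a Banach space realizing the completion of V for the order-unit norm
    via the dense isometric linear embedding iota.  The functionals of S
    are given through their (unique, continuous) extensions to B. *)
Definition cone_setting {R : realType} {V : topologicalLmodType R}
  {B : completeNormedModType R} (iota : {linear V -> B})
  (S : set (B -> R)) (e : V) (m : B -> R) (kappa : R) : Prop :=
  let coneV := [set x : V | x != 0 /\ forall l, S l -> 0 <= l (iota x)] in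
  (forall l, S l -> dualR l /\ continuous (l \o iota)) /\
  (forall x : V, (forall l, S l -> l (iota x) = 0) -> x = 0) /\
  coneV e /\
  (forall h : V, exists lam : R, 0 <= lam /\ coneV (lam *: e - h)) /\
  injective iota /\
  closure (range iota) = [set: B] /\
  (forall h : V, `| iota h | =
     inf [set lam : R | 0 <= lam /\ forall l, S l ->
            0 <= l (iota (lam *: e + h)) /\ 0 <= l (iota (lam *: e - h))]) /\
  in_Sstar S m /\ m (iota e) = 1 /\ 0 < kappa < 1 /\
  (forall h, coneB S h -> kappa * `| h | <= m h).

(* Main.v *)
Require Import Defs.
From HB Require Import structures.
From mathcomp Require Import all_boot all_order all_algebra.
From mathcomp Require Import all_classical all_reals all_analysis.
From mathcomp Require Import complex.
From mathcomp Require Import ring lra.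
Import Order.TTheory GRing.Theory Num.Theory.
Import numFieldNormedType.Exports.
Local Open Scope ring_scope.
Local Open Scope classical_set_scope.


Section Half.
Variable R : realType.

Lemma lra_atoms (a b c d : R) : a * b + c = d -> c = d - a * b.
Proof. move=> h. lra. Qed.

Lemma halfplane (P : R -> R -> Prop) :
  (forall pa qa pb qb al be, P pa qa -> P pb qb -> 0 <= al -> 0 <= be ->
     al * pa + be * pb = 1 -> al * qa + be * qb = 0 -> False) ->
  exists k1 k2 : R, (k1 != 0 \/ k2 != 0) /\
    forall p q, P p q -> 0 <= k1 * p + k2 * q.
Proof.
move=> NR.
have zero : forall p, P p 0 -> p <= 0.
  move=> p Pp; rewrite leNgt; apply/negP => p0.
  apply: (NR p 0 p 0 p^-1 0) => //; first by rewrite invr_ge0 ltW.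
    by rewrite mul0r addr0 mulVf // gt_eqF.
  by rewrite !mulr0 addr0.
have cmp : forall p q p' q', P p q -> P p' q' -> 0 < q -> q' < 0 -> p / q <= p' / q'.
  move=> p q p' q' Pp Pp' q0 q'0; rewrite leNgt; apply/negP => lt.
  set x := p / q in lt; set y := p' / q' in lt.
  have ex : p = x * q by rewrite /x divfK // gt_eqF.
  have ey : p' = y * q' by rewrite /y divfK // lt_eqF.
  set K := q * p' - q' * p.
  have K0 : 0 < K.
    have h1 : 0 < q * (- q') * (x - y) by rewrite !mulr_gt0 // ?oppr_gt0 ?subr_gt0.
    rewrite /K ex ey; lra.
  apply: (NR p q p' q' (- q' / K) (q / K)) => //.
  - by rewrite divr_ge0 // ?oppr_ge0 ltW.
  - by rewrite divr_ge0 // ltW.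
  - rewrite /K; field; rewrite -/K gt_eqF //.
  - field; rewrite -/K gt_eqF //.
case: (pselect (forall p q, P p q -> q <= 0)) => [Hup|Hup].
  exists 0, (-1); split; first by right; rewrite oppr_eq0 oner_eq0.
  by move=> p q /Hup; rewrite mul0r add0r mulN1r oppr_ge0.
case: (pselect (forall p q, P p q -> 0 <= q)) => [Hlo|Hlo].
  exists 0, 1; split; first by right; rewrite oner_eq0.
  by move=> p q /Hlo; rewrite mul0r add0r mul1r.
have [pa [qa [Pa qa0]]] : exists p q, P p q /\ 0 < q.
  apply: contra_notP Hup => H p q Pp; rewrite leNgt; apply/negP => q0; apply: H; exists p, q; done.
have [pb [qb [Pb qb0]]] : exists p q, P p q /\ q < 0.
  apply: contra_notP Hlo => H p q Pp; rewrite leNgt; apply/negP => q0; apply: H; exists p, q; done.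
pose E := [set x | exists p q, P p q /\ 0 < q /\ x = p / q].
have En : E !=set0 by exists (pa / qa); exists pa, qa.
have Eub : forall p' q', P p' q' -> q' < 0 -> ubound E (p' / q').
  by move=> p' q' Pp' q'0 x [p [q [Pp [q0 ->]]]]; apply: cmp.
have hs : has_sup E by split => //; exists (pb / qb); apply: Eub.
exists (-1), (sup E); split; first by left; rewrite oppr_eq0 oner_eq0.
move=> p q Pp.
case: (ltgtP q 0) => [q0|q0|q0]; last first.
  by move: Pp; rewrite q0 => /zero; rewrite mulr0 addr0 mulN1r oppr_ge0.
- have : p / q <= sup E by apply: sup_upper_bound => //; exists p, q.
  have ex : p = (p / q) * q by rewrite divfK // gt_eqF.
  move: (p / q) ex => x ex le; rewrite ex; nra.
- have := ge_sup En (Eub p q Pp q0).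
  have ex : p = (p / q) * q by rewrite divfK // lt_eqF.
  move: (p / q) ex => x ex le; rewrite ex; nra.
Qed.
End Half.
Section TwoD.
Variable R : realType.
Local Open Scope complex_scope.

Lemma twoD (G : set R[i]) (T : R[i]) :
  (forall g1 g2 (d1 d2 : R[i]), G g1 -> G g2 -> 0 <= complex.Re d1 -> complex.Im d1 <= 0 ->
     0 <= complex.Re d2 -> complex.Im d2 <= 0 -> T = d1 * g1 + d2 * g2 -> False) ->
  exists c : R[i], c != 0 /\ forall g, G g -> 0 <= complex.Re (c * g) /\ 0 <= complex.Im (c * g).
Proof.
move=> NR.
have [T0|T0] := eqVneq T 0.
  exists 1; split; first by rewrite oner_eq0.
  move=> g Gg; exfalso; apply: (NR g g 0 0) => //=; rewrite ?T0 ?mul0r ?addr0 //=.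
pose P := fun p q : R => exists g, G g /\
  ((p = complex.Re (g / T) /\ q = complex.Im (g / T)) \/ (p = complex.Im (g / T) /\ q = - complex.Re (g / T))).
have [k1 [k2 [k0 Hk]]] : exists k1 k2 : R, (k1 != 0 \/ k2 != 0) /\
    forall p q, P p q -> 0 <= k1 * p + k2 * q.
  apply: halfplane => pa qa pb qb al be [g1 [G1 H1]] [g2 [G2 H2]] al0 be0 e1 e2.
  have dex : forall (g : R[i]) (al p q : R), 0 <= al ->
      ((p = complex.Re (g / T) /\ q = complex.Im (g / T)) \/
       (p = complex.Im (g / T) /\ q = - complex.Re (g / T))) ->
      exists d : R[i], d * (g / T) = (al * p) +i* (al * q) /\
        0 <= complex.Re d /\ complex.Im d <= 0.
    move=> g a p q a0 [[-> ->]|[-> ->]].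
      exists (a +i* 0); split => //; by case: (g / T) => x y; simpc.
    exists (0 +i* (- a)); split; last by rewrite /= oppr_le0.
    by case: (g / T) => x y; simpc; congr (_ +i* _); ring.
  have [d1 [E1 [d1a d1b]]] := dex g1 al pa qa al0 H1.
  have [d2 [E2 [d2a d2b]]] := dex g2 be pb qb be0 H2.
  apply: (NR g1 g2 d1 d2) => //.
  have : d1 * (g1 / T) + d2 * (g2 / T) = 1.
    by rewrite E1 E2; simpc; rewrite e1 e2.
  rewrite !mulrA -mulrDl => /eqP; rewrite (can2_eq (divfK T0) (mulfK T0)) mul1r.
  by move/eqP.
exists ((k1 +i* (- k2)) / T); split.
  rewrite mulf_eq0 invr_eq0 negb_or T0 andbT eq_complex /= negb_and oppr_eq0.
  by case: k0 => ->; rewrite ?orbT.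
move=> g Gg.
have -> : (k1 +i* - k2) / T * g = (k1 +i* - k2) * (g / T) by rewrite mulrAC mulrA.
have h1 := Hk _ _ (ex_intro _ g (conj Gg (or_introl (conj erefl erefl)))).
have h2 := Hk _ _ (ex_intro _ g (conj Gg (or_intror (conj erefl erefl)))).
move: h1 h2; case: (g / T) => x y /= h1 h2; simpc => /=; split; lra.
Qed.
End TwoD.
Section Capp.
Variables (R : realType) (B : normedModType R).
Local Open Scope complex_scope.
Implicit Types (f : B -> R).

Lemma rlinD f x y : is_rlin f -> f (x + y) = f x + f y.
Proof. by move=> h; rewrite -[x]scale1r h mul1r scale1r. Qed.
Lemma rlin0 f : is_rlin f -> f 0 = 0.
Proof. move=> h; have := rlinD f 0 0 h; rewrite addr0 => e; lra. Qed.
Lemma rlinZ f a x : is_rlin f -> f (a *: x) = a * f x.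
Proof. by move=> h; rewrite -[a *: x]addr0 h rlin0 // addr0. Qed.
Lemma rlinN f x : is_rlin f -> f (- x) = - f x.
Proof. by move=> h; rewrite -scaleN1r rlinZ // mulN1r. Qed.
Lemma rlinB f x y : is_rlin f -> f (x - y) = f x - f y.
Proof. by move=> h; rewrite rlinD // rlinN. Qed.

Lemma dualR3 f g k (a b : R) : dualR f -> dualR g -> dualR k ->
  dualR (fun x => f x + a * g x + b * k x).
Proof.
move=> [lf cf] [lg cg] [lk ck]; split.
  move=> c x y; rewrite lf lg lk; ring.
move=> x; apply: cvgD; [apply: cvgD|]; first exact: cf.
  by apply: cvgM; [exact: cvg_cst | exact: cg].
by apply: cvgM; [exact: cvg_cst | exact: ck].
Qed.

Lemma dualRs f (s : R) : dualR f -> dualR (fun x => s * f x).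
Proof.
move=> [lf cf]; split; first by move=> c x y; rewrite lf; ring.
by move=> x; apply: cvgM; [exact: cvg_cst | exact: cf].
Qed.

Lemma capp_E (l : (B -> R) * (B -> R)) (w : BC) :
  capp l w = (l.1 w.1 - l.2 w.2) +i* (l.2 w.1 + l.1 w.2).
Proof. by case: l => f1 f2; case: w => w1 w2; rewrite /capp /=; simpc; congr (_ +i* _); ring. Qed.

Definition cmul (c : R[i]) (w : @BC R B) : @BC R B :=
  (complex.Re c *: w.1 - complex.Im c *: w.2, complex.Im c *: w.1 + complex.Re c *: w.2).

Lemma capp_cmul (l : (B -> R) * (B -> R)) c w : is_rlin l.1 -> is_rlin l.2 ->
  capp l (cmul c w) = c * capp l w.
Proof.
move=> h1 h2; rewrite !capp_E; case: c => c1 c2 /=.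
rewrite !rlinB // !rlinD // !rlinZ //; simpc; congr (_ +i* _); ring.
Qed.

Lemma capp_add (l : (B -> R) * (B -> R)) (w w' : BC) : is_rlin l.1 -> is_rlin l.2 ->
  capp l (w.1 + w'.1, w.2 + w'.2) = capp l w + capp l w'.
Proof.
move=> h1 h2; rewrite !capp_E /= !rlinD //; simpc; congr (_ +i* _); ring.
Qed.

Lemma capp0 (l : (B -> R) * (B -> R)) : is_rlin l.1 -> is_rlin l.2 -> capp l (0, 0) = 0.
Proof. by move=> h1 h2; rewrite capp_E /= !rlin0 // subr0 addr0. Qed.


Lemma hat_sub (S : set (B -> R)) (lp : (B -> R) * (B -> R)) : hatdualconeC S lp -> dualconeC S lp.
Proof.
case=> [l [p [s1 [s2 [[[dl _] lpos] [[[dp _] ppos] [hs1 [hs2 ->]]]]]]]].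
have d1 := dualRs _ s1 dl; have d2 := dualRs _ s2 dp.
split; first by split.
move=> w [z [x [y [z0 [cx [cy ->]]]]]].
change (capp (fun x => s1 * l x, fun x => s2 * p x) (cmul z (x, y)) != 0).
have r1 := d1.1; have r2 := d2.1.
rewrite capp_cmul //; apply: mulf_neq0 => //; rewrite capp_E /=.
have := lpos x cx; have := lpos y cy; have := ppos x cx; have := ppos y cy.
move=> h1 h2 h3 h4; rewrite eq_complex /= negb_and.
by case: hs1 => ->; case: hs2 => ->; apply/orP; [right|left|left|right];
  apply/eqP => e; lra.
Qed.

Lemma coneC_of (S : set (B -> R)) (x y : B) : coneB S x -> coneB S y -> coneC S (x, y).
Proof.
move=> cx cy; exists (1 +i* 0), x, y; split.
  by rewrite eq_complex /= negb_and oner_eq0.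
by split=> //; split=> //=; rewrite !scale1r !scale0r subr0 add0r.
Qed.

Lemma main_rev (S : set (B -> R)) (m : B -> R) (h g : @BC R B) (l : (B -> R) * (B -> R)) :
  (forall s, S s -> dualR s) -> dualR m -> (forall x, coneB S x -> 0 < m x) ->
  dualconeC S l -> coneC S g ->
  exists l', hatdualconeC S l' /\ (capp l' h / capp l' g = capp l h / capp l g)%R.
Proof.
move=> HS Hm Hmp [[dl1 dl2] Hl] gC.
have rl1 := dl1.1; have rl2 := dl2.1.
have gnz := Hl g gC.
set r := (capp l h / capp l g)%R.
pose W : @BC R B := (h.1 - (cmul r g).1, h.2 - (cmul r g).2).
have decomp : forall l' : (B -> R) * (B -> R), is_rlin l'.1 -> is_rlin l'.2 ->
    capp l' h = r * capp l' g + capp l' W.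
  move=> l' a1 a2; rewrite -capp_cmul // -capp_add //; congr capp.
  have e1 : (cmul r g).1 + (h.1 - (cmul r g).1) = h.1 by rewrite addrC subrK.
  have e2 : (cmul r g).2 + (h.2 - (cmul r g).2) = h.2 by rewrite addrC subrK.
  by rewrite /W /= e1 e2; exact: surjective_pairing.
have W0 : capp l W = 0.
  have := decomp l rl1 rl2; rewrite /r divfK // -[X in X = _]addr0.
  by move/addrI => <-.
suff [l' [hl' cW]] : exists l', hatdualconeC S l' /\ capp l' W = 0.
  exists l'; split=> //.
  have [[d1 d2] Hl'] := hat_sub _ _ hl'.
  have ng := Hl' g gC.
  have r1 := d1.1; have r2 := d2.1.
  by rewrite decomp // cW addr0 mulfK.
pose fhat := fun f : B -> R => f W.1 +i* f W.2.
pose G := [set z | exists f, dualcone S f /\ z = fhat f].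
pose T := - ((1 +i* (-1)) * fhat m).
have idm : idualcone S m by split => //; split => // x hx; apply: ltW; apply: Hmp.
case: (pselect (exists g1 g2 d1 d2, G g1 /\ G g2 /\ 0 <= complex.Re d1 /\
   complex.Im d1 <= 0 /\ 0 <= complex.Re d2 /\ complex.Im d2 <= 0 /\
   T = d1 * g1 + d2 * g2)) => [rep|norep].
  case: rep => g1 [g2 [d1 [d2 [[f1 [[df1 pf1] ->]] [[f2 [[df2 pf2] ->]] [a1 [b1 [a2 [b2 eT]]]]]]]]].
  pose F1 := fun x => m x + complex.Re d1 * f1 x + complex.Re d2 * f2 x.
  pose F2 := fun x => m x + (- complex.Im d1) * f1 x + (- complex.Im d2) * f2 x.
  have dF1 : dualR F1 := dualR3 _ _ _ _ _ Hm df1 df2.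
  have dF2 : dualR F2 := dualR3 _ _ _ _ _ Hm df1 df2.
  have pF1 : forall x, coneB S x -> 0 < F1 x.
    move=> x hx; have := Hmp x hx; have := pf1 x hx; have := pf2 x hx.
    move=> e1 e2 e3; have := mulr_ge0 a1 e2; have := mulr_ge0 a2 e1.
    rewrite /F1; lra.
  have pF2 : forall x, coneB S x -> 0 < F2 x.
    move=> x hx; have := Hmp x hx; have := pf1 x hx; have := pf2 x hx.
    have b1' : 0 <= - complex.Im d1 by rewrite oppr_ge0.
    have b2' : 0 <= - complex.Im d2 by rewrite oppr_ge0.
    move=> e1 e2 e3; have := mulr_ge0 b1' e2; have := mulr_ge0 b2' e1.
    rewrite /F2; lra.
  exists (fun x => 1 * F1 x, fun x => -1 * F2 x); split.
    exists F1, F2, 1, (-1); split.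
      by split => //; split => // x hx; apply: ltW; apply: pF1.
    split; first by split => //; split => // x hx; apply: ltW; apply: pF2.
    by split; [left|split; [right|]].
  rewrite capp_E; move: eT; rewrite /T /fhat.
  move: (W.1) (W.2) => U V.
  rewrite /F1 /F2 /=.
  clear pF1 pF2 dF1 dF2 F1 F2 a1 b1 a2 b2.
  case: d1 => u1 v1; case: d2 => u2 v2 /=; simpc.
  move=> /eqP; rewrite eq_complex /= => /andP [/eqP e1 /eqP e2]; apply/eqP; rewrite eq_complex /=; apply/andP; split; apply/eqP; lra.
have [c [c0 Hc]] : exists c : R[i], c != 0 /\ forall g, G g ->
    0 <= complex.Re (c * g) /\ 0 <= complex.Im (c * g).
  apply: (@twoD R G T) => g1 g2 d1 d2 G1 G2 a1 b1 a2 b2 e; apply: norep.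
  by exists g1, g2, d1, d2; do !split.
pose X := (cmul c W).1; pose Y := (cmul c W).2.
have sXY : forall s, S s -> 0 <= s X /\ 0 <= s Y.
  move=> s Ss; have ds := HS s Ss.
  have Gs : G (fhat s) by exists s; split => //; split => // x hx; exact: hx.2 s Ss.
  have [h1 h2] := Hc (fhat s) Gs.
  move: h1 h2; rewrite /X /Y /fhat /cmul; move: (W.1) (W.2) => U V /=.
  case: (c) => c1 c2 /=; simpc.
  have rs := ds.1.
  rewrite !rlinB // !rlinD // !rlinZ //= => h1 h2; split; lra.
have cX : capp l (X, Y) = 0.
  have -> : (X, Y) = cmul c W by [].
  by rewrite capp_cmul // W0 mulr0.
have cB : forall x, x != 0 -> (forall s, S s -> 0 <= s x) -> coneB S x by move=> x x0 hx; split.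
case: (eqVneq X 0) => X0; case: (eqVneq Y 0) => Y0.
- exists (fun x => 1 * m x, fun x => 1 * m x); split.
    by exists m, m, 1, 1; split => //; split => //; split; [left|split; [left|]].
  have dm := dualRs _ 1 Hm.
  have : capp (fun x => 1 * m x, fun x => 1 * m x) (cmul c W) = 0.
    have -> : cmul c W = (X, Y) by [].
    by rewrite X0 Y0 capp0 //; exact: dm.1.
  have rm := dm.1.
  by rewrite capp_cmul // => /eqP; rewrite mulf_eq0 (negbTE c0) /= => /eqP.
- exfalso; have cY : coneB S Y by apply: cB => // s Ss; case: (sXY s Ss).
  have := Hl _ (coneC_of _ _ _ cY cY); move: cX; rewrite X0 !capp_E /= !rlin0 //.
  simpc => /eqP; rewrite eq_complex /= => /andP [/eqP e1 /eqP e2].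
  rewrite eq_complex /= negb_and => /orP [] /eqP []; lra.
- exfalso; have cX' : coneB S X by apply: cB => // s Ss; case: (sXY s Ss).
  have := Hl _ (coneC_of _ _ _ cX' cX'); move: cX; rewrite Y0 !capp_E /= !rlin0 //.
  simpc => /eqP; rewrite eq_complex /= => /andP [/eqP e1 /eqP e2].
  rewrite eq_complex /= negb_and => /orP [] /eqP []; lra.
- exfalso; have cX' : coneB S X by apply: cB => // s Ss; case: (sXY s Ss).
  have cY : coneB S Y by apply: cB => // s Ss; case: (sXY s Ss).
  by have := Hl _ (coneC_of _ _ _ cX' cY); rewrite cX eqxx.
Qed.

End Capp.

Theorem lemma5p9 (R : realType) (V : topologicalLmodType R)
  (B : completeNormedModType R) (iota : {linear V -> B})
  (S : set (B -> R)) (e : V) (m : B -> R) (kappa : R)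
  (Hset : cone_setting iota S e m kappa)
  (h g : BC) (hC : coneC S h) (gC : coneC S g) :
  Eset S h g = [set (capp l h / capp l g)%R | l in hatdualconeC S].
Proof.
move: Hset; rewrite /cone_setting /= => [[HS [_ [_ [_ [_ [_ [_ [[Hm _] [_ [Hk Hmk]]]]]]]]]]].
have HSd : forall s, S s -> dualR s by move=> s Ss; case: (HS s Ss).
case/andP: Hk => k0 _.
have Hmp : forall x, coneB S x -> 0 < m x.
  move=> x hx; apply: (lt_le_trans _ (Hmk x hx)).
  by rewrite mulr_gt0 // normr_gt0; case: hx.
rewrite /Eset; apply/seteqP; split => z [l Hl <-].
  have [l' [hl' el]] := @main_rev R B S m h g l HSd Hm Hmp Hl gC.
  by exists l'.
by exists l => //; apply: hat_sub.
Qed.
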